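(* Let $K$ be a number field. Given a finite set of closed points $\{\theta_i\}_{i\in I}$ of $\mathbb{A}^1_K$ with residue fields $K(\theta_i)$, and given for each $i\in I$ a Châtelet surface $\mathcal{S}_i$ defined over $K(\theta_i)$, there exists a Châtelet surface bundle over $\mathbb{A}^1$ defined over $K$ whose fiber at $\theta_i$ is isomorphic to $\mathcal{S}_i$ for every $i\in I$.
   Context: A Châtelet surface over a field $k$ (of characteristic $0$) is the smooth projective surface $\mathcal{S}$ associated with an affine surface $y^2-az^2=P(x)$ in $\mathbb{A}^3$, where $a\in k^*$ is a nonzero constant and $P(x)\in k[x]$ is a separable polynomial of degree $4$; the projective model is obtained by gluing the surface $Y^2-aZ^2=W^2P(x)$ in $(\mathbb{P}^1\setminus\{\infty\})\times\mathbb{P}^2$ with the surface $Y^2-aZ^2=W'^2P^*(x')$ in $(\mathbb{P}^1\setminus\{0\})\times\mathbb{P}^2$ via $x=1/x'$, $W=x'^2W'$, where $P^*(x')=x'^4P(1/x')$. A Châtelet surface bundle over $\mathbb{A}^1$ defined over $K$ is the family of such surfaces parameterised by $t$ given by $y^2-a_tz^2=P_t(x)$ (with the projective model in $\mathbb{A}^1\times\mathbb{P}^1\times\mathbb{P}^2$ obtained by replacing $a$ by $a_t$ and $P$ by $P_t$ in the gluing construction), where $a_t\in K[t]$ is nonzero and $P_t(x)\in K[t,x]$ has degree $4$ in $x$; its fiber at a closed point $\theta$ of $\mathbb{A}^1$ is the surface $y^2-a_\theta z^2=P_\theta(x)$ over the residue field $K(\theta)$. *)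

(* Defs.v *)
From HB Require Import structures.
From mathcomp Require Import all_boot all_order all_algebra all_field.
Set Implicit Arguments. Unset Strict Implicit. Unset Printing Implicit Defensive.
Import GRing.Theory.
Local Open Scope ring_scope.

(* A Chatelet surface over a field k is given by its data (a, P):
   the smooth projective model of y^2 - a z^2 = P(x), a in k^*,
   P separable of degree 4 (size 5). *)
Record chatelet_data (k : fieldType) := ChateletData {
  ch_a : k;
  ch_P : {poly k} }.

Definition is_chatelet (k : fieldType) (S : chatelet_data k) : Prop :=
  ch_a S != 0 /\ size (ch_P S) = 5%N /\ separable_poly (ch_P S).

(* A Chatelet surface bundle over A^1_K: a_t in K[t] nonzero,
   P_t in K[t][x] of degree 4 in x. *)
Definition is_chatelet_bundle (K : fieldType) (a : {poly K}) (P : {poly {poly K}}) : Prop :=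
  a != 0 /\ size P = 5%N.

(* A closed point theta of A^1_K is presented by a finite extension L of K
   generated by theta : L, so that L = K(theta) is its residue field. *)
Definition closed_point_gen (K : fieldType) (L : fieldExtType K) (th : L) : Prop :=
  (<<1%VS; th>>)%VS = fullv.

Definition ev_at (K : fieldType) (L : fieldExtType K) (th : L) (q : {poly K}) : L :=
  (map_poly (in_alg L) q).[th].

(* two presented closed points are the same point of A^1_K iff the kernels
   of K[t] -> K(theta) agree *)
Definition same_closed_point (K : fieldType) (L1 L2 : fieldExtType K)
  (th1 : L1) (th2 : L2) : Prop :=
  forall q : {poly K}, ev_at th1 q = 0 <-> ev_at th2 q = 0.

Definition bundle_fiber (K : fieldType) (L : fieldExtType K) (th : L)
  (a : {poly K}) (P : {poly {poly K}}) : chatelet_data L :=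
  ChateletData (ev_at th a) (map_poly (ev_at th) P).

Notation numberFieldType := (fieldExtType rat).

(* Main.v *)
Require Import Defs.
From HB Require Import structures.
From mathcomp Require Import all_boot all_order all_algebra all_field.
From Stdlib Require Import Classical.
Local Open Scope ring_scope.
Import GRing.Theory.

Section Ev.
Variables (K : fieldType) (L : fieldExtType K) (th : L).

Lemma ev_atM p q : ev_at th (p * q) = ev_at th p * ev_at th q.
Proof. by rewrite /ev_at rmorphM hornerM. Qed.
Lemma ev_atD p q : ev_at th (p + q) = ev_at th p + ev_at th q.
Proof. by rewrite /ev_at rmorphD hornerD. Qed.
Lemma ev_atB p q : ev_at th (p - q) = ev_at th p - ev_at th q.
Proof. by rewrite /ev_at rmorphB hornerD hornerN. Qed.
Lemma ev_at1 : ev_at th 1 = 1.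
Proof. by rewrite /ev_at rmorph1 hornerC. Qed.
Lemma ev_at0 : ev_at th 0 = 0.
Proof. by rewrite /ev_at rmorph0 horner0. Qed.

Lemma ev_surj : closed_point_gen th -> forall y : L, exists r, ev_at th r = y.
Proof.
move=> Hg y.
have : y \in <<1; th>>%VS by rewrite Hg memvf.
by case/Fadjoin1_polyP=> p ->; exists p.
Qed.
End Ev.

Section Interp.
Variables (K : fieldType) (I : finType) (L : I -> fieldExtType K) (th : forall i, L i).
Hypothesis Hgen : forall i, closed_point_gen (th i).
Hypothesis Hdist : forall i j, i != j -> ~ same_closed_point (th i) (th j).

Lemma sepA i j : i != j -> exists g, ev_at (th j) g = 0 /\ ev_at (th i) g != 0.
Proof.
move=> ij; have := Hdist i j ij; rewrite /same_closed_point => H.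
have [q Hq] := not_all_ex_not _ _ H.
have [ej|ej] := eqVneq (ev_at (th j) q) 0.
  exists q; split => //; apply/eqP => ei; apply: Hq; by split.
have ei : ev_at (th i) q = 0.
  apply: NNPP => ei; apply: Hq; split => // /eqP; rewrite (negbTE ej) //.
have [r Hr] := @ev_surj _ _ _ (Hgen j) (ev_at (th j) q)^-1.
exists (1 - q * r); rewrite !ev_atB !ev_atM !ev_at1 Hr ei mulfV // subrr.
by split => //; rewrite mul0r subr0 oner_eq0.
Qed.

Lemma sepB i (s : seq I) : i \notin s ->
  exists h, (forall j, j \in s -> ev_at (th j) h = 0) /\ ev_at (th i) h != 0.
Proof.
elim: s => [|j s IH] /=.
  by move=> _; exists 1; split => //; rewrite ev_at1 oner_eq0.
rewrite in_cons negb_or => /andP[ij /IH [h [H1 H2]]].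
have [g [g1 g2]] := sepA i j ij.
exists (h * g); split; last by rewrite ev_atM mulf_neq0.
move=> k; rewrite in_cons => /orP[/eqP->|ks]; first by rewrite ev_atM g1 mulr0.
by rewrite ev_atM H1 // mul0r.
Qed.

Lemma interp (b : forall i, L i) : exists p, forall i, ev_at (th i) p = b i.
Proof.
suff : forall s : seq I, exists p, forall i, i \in s -> ev_at (th i) p = b i.
  by case/(_ (enum I)) => p Hp; exists p => i; apply: Hp; rewrite mem_enum.
elim=> [|i s [p' Hp']]; first by exists 0.
have : i \notin filter (fun j => j != i) (enum I) by rewrite mem_filter eqxx.
case/sepB => h [h1 h2].
have [r Hr] := @ev_surj _ _ _ (Hgen i) ((b i - ev_at (th i) p') / ev_at (th i) h).
exists (p' + r * h) => j; rewrite in_cons => /orP[/eqP->|js].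
  by rewrite ev_atD ev_atM Hr divfK // addrC subrK.
have [->|ji] := eqVneq j i.
  by rewrite ev_atD ev_atM Hr divfK // addrC subrK.
rewrite ev_atD ev_atM h1 ?mulr0 ?addr0 ?Hp' //.
by rewrite mem_filter ji mem_enum.
Qed.
End Interp.

Theorem proposition3p3 (K : numberFieldType) (I : finType)
  (L : I -> fieldExtType K) (th : forall i, L i)
  (S : forall i, chatelet_data (L i)) :
  (forall i, closed_point_gen (th i)) ->
  (forall i j, i != j -> ~ same_closed_point (th i) (th j)) ->
  (forall i, is_chatelet (S i)) ->
  exists (a : {poly K}) (P : {poly {poly K}}),
    is_chatelet_bundle a P /\
    forall i, bundle_fiber (th i) a P = S i.
Proof.
move=> Hgen Hdist Hch.
case: (pickP (fun _ : I => true)) => [i0 _|Hn]; last first.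
  exists 1, ('X^4); split; first by split; rewrite ?oner_eq0 ?size_polyXn.
  by move=> i; have := Hn i.
have [a Ha] := @interp _ _ _ _ Hgen Hdist (fun i => ch_a (S i)).
have [p0 H0] := @interp _ _ _ _ Hgen Hdist (fun i => (ch_P (S i))`_0).
have [p1 H1] := @interp _ _ _ _ Hgen Hdist (fun i => (ch_P (S i))`_1).
have [p2 H2] := @interp _ _ _ _ Hgen Hdist (fun i => (ch_P (S i))`_2).
have [p3 H3] := @interp _ _ _ _ Hgen Hdist (fun i => (ch_P (S i))`_3).
have [p4 H4] := @interp _ _ _ _ Hgen Hdist (fun i => (ch_P (S i))`_4).
have [a0 [sz _]] := Hch i0.
have p4n : p4 != 0.
  apply/eqP => p40; have := H4 i0; rewrite p40 ev_at0 => /esym/eqP.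
  have : lead_coef (ch_P (S i0)) != 0 by rewrite lead_coef_eq0 -size_poly_eq0 sz.
  by rewrite lead_coefE sz => /negbTE ->.
have HP k : (Poly [:: p0; p1; p2; p3; p4])`_k = [:: p0; p1; p2; p3; p4]`_k by rewrite coef_Poly.
exists a, (Poly [:: p0; p1; p2; p3; p4]); split.
  split; last by rewrite (@PolyK _ 1).
  by apply/eqP => a00; move: a0; rewrite -(Ha i0) a00 ev_at0 eqxx.
move=> i; case: (S i) (Ha i) (H0 i) (H1 i) (H2 i) (H3 i) (H4 i) (Hch i) => ai Pi.
rewrite /bundle_fiber => -> e0 e1 e2 e3 e4 [_ [szi _]]; congr ChateletData.
apply/polyP => k; rewrite coef_map_id0 ?ev_at0 // HP.
do 5?[case: k => [|k] //=]; rewrite nth_nil ev_at0 nth_default //; rewrite szi; by [].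
Qed.
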